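(* Let $(X,\rho)$ be a metric space, $(A_k)\subset CL(X)$ and $A\in CL(X)$. Then the following statements are equivalent: (i) $(A_k)$ is Wijsman convergent to $A$; (ii) $(A_k)$ is $f$-Wijsman statistically convergent to $A$ for every unbounded modulus $f$; (iii) $(A_k)$ is $f$-Wijsman statistically convergent to $A$ for every unbounded, concave and slowly varying modulus $f$.
   Context: A modulus is a function $f\colon[0,\infty)\to[0,\infty)$ such that $f(x)=0$ iff $x=0$, $f$ is subadditive, increasing and continuous. A modulus $f$ is slowly varying if $\lim_{x\to\infty}\frac{f(ax)}{f(x)}=1$ for every $a>0$. $CL(X)$ denotes the set of all non-empty closed subsets of $(X,\rho)$, and $d(x,B)=\inf_{y\in B}\rho(x,y)$. $(A_k)$ is Wijsman convergent to $A$ if $d(x,A_k)\to d(x,A)$ for every $x\in X$. For an unbounded modulus $f$ and $K\subseteq\mathbb N$, the $f$-density is $d^f(K)=\lim_{n\to\infty}\frac{f(|\{k\le n:k\in K\}|)}{f(n)}$ (when the limit exists). A real sequence $(x_k)$ is $f$-statistically convergent to $l$ if for every $\varepsilon>0$ the set $\{k:|x_k-l|\ge\varepsilon\}$ has $f$-density $0$. $(A_k)$ is $f$-Wijsman statistically convergent to $A$ if for every $x\in X$ the sequence $(d(x,A_k))$ is $f$-statistically convergent to $d(x,A)$. *)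

(* Defs.v *)
From Stdlib Require Import Reals Lra ClassicalEpsilon.
From Coquelicot Require Import Coquelicot.
Open Scope R_scope.

Definition is_metric {X : Type} (rho : X -> X -> R) : Prop :=
  (forall x y, 0 <= rho x y) /\
  (forall x y, rho x y = 0 <-> x = y) /\
  (forall x y, rho x y = rho y x) /\
  (forall x y z, rho x z <= rho x y + rho y z).

Definition closed_in {X : Type} (rho : X -> X -> R) (B : X -> Prop) : Prop :=
  forall x, (forall eps, 0 < eps -> exists y, B y /\ rho x y < eps) -> B x.

Definition in_CL {X : Type} (rho : X -> X -> R) (B : X -> Prop) : Prop :=
  (exists y, B y) /\ closed_in rho B.

(* d(x,B) = inf_{y in B} rho(x,y)  (finite for non-empty B, as rho >= 0). *)
Definition dist_set {X : Type} (rho : X -> X -> R) (x : X) (B : X -> Prop) : R :=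
  real (Glb_Rbar (fun r => exists y, B y /\ r = rho x y)).

Definition wijsman_conv {X : Type} (rho : X -> X -> R)
  (A : nat -> X -> Prop) (A0 : X -> Prop) : Prop :=
  forall x, is_lim_seq (fun k => dist_set rho x (A k)) (dist_set rho x A0).

Definition is_modulus (f : R -> R) : Prop :=
  (forall x, 0 <= x -> 0 <= f x) /\
  (forall x, 0 <= x -> (f x = 0 <-> x = 0)) /\
  (forall x y, 0 <= x -> 0 <= y -> f (x + y) <= f x + f y) /\
  (forall x y, 0 <= x -> x <= y -> f x <= f y) /\
  (forall x, 0 <= x -> forall eps, 0 < eps -> exists delta, 0 < delta /\
     forall y, 0 <= y -> Rabs (y - x) < delta -> Rabs (f y - f x) < eps).

Definition unbounded_fun (f : R -> R) : Prop :=
  forall M, exists x, 0 <= x /\ M < f x.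

Definition concave_on_nonneg (f : R -> R) : Prop :=
  forall x y t, 0 <= x -> 0 <= y -> 0 <= t <= 1 ->
    t * f x + (1 - t) * f y <= f (t * x + (1 - t) * y).

Definition slowly_varying (f : R -> R) : Prop :=
  forall a, 0 < a -> is_lim (fun x => f (a * x) / f x) p_infty 1.

(* |{k <= n : k in K}|, indices k ranging over 1..n (N = {1,2,...}). *)
Definition ind (P : Prop) : nat :=
  if excluded_middle_informative P then 1%nat else 0%nat.

Fixpoint count_upto (K : nat -> Prop) (n : nat) : nat :=
  match n with
  | O => O
  | S m => (count_upto K m + ind (K (S m)))%nat
  end.

Definition f_density_zero (f : R -> R) (K : nat -> Prop) : Prop :=
  is_lim_seq (fun n => f (INR (count_upto K n)) / f (INR n)) 0.

Definition f_stat_conv (f : R -> R) (u : nat -> R) (l : R) : Prop :=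
  forall eps, 0 < eps -> f_density_zero f (fun k => Rabs (u k - l) >= eps).

Definition f_wijsman_stat_conv {X : Type} (rho : X -> X -> R) (f : R -> R)
  (A : nat -> X -> Prop) (A0 : X -> Prop) : Prop :=
  forall x, f_stat_conv f (fun k => dist_set rho x (A k)) (dist_set rho x A0).

(* Main.v *)
Require Import Defs.
From Stdlib Require Import Reals Lra Lia Psatz Classical ClassicalEpsilon.
From Coquelicot Require Import Coquelicot.
Open Scope R_scope.

Fixpoint tt (h : nat -> nat) (m : nat) : nat :=
  match m with
  | O => O
  | S p => (tt h p + S ((p + 2) * tt h p + h (tt h p)))%nat
  end.

Definition gg (h : nat -> nat) (m : nat) : nat :=
  S ((m + 2) * tt h m + h (tt h m)).

Lemma tt_S h m : tt h (S m) = (tt h m + gg h m)%nat.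
Proof. reflexivity. Qed.

Lemma gg_mono1 h m : (gg h m <= gg h (S m))%nat.
Proof. unfold gg at 2. rewrite tt_S. unfold gg. simpl. nia. Qed.

Lemma gg_mono h m k : (gg h m <= gg h (m + k))%nat.
Proof.
  induction k. rewrite !Nat.add_0_r, ?Nat.mul_0_l, ?Nat.add_0_r. lia.
  pose proof (gg_mono1 h (m + k)). rewrite Nat.add_succ_r. lia.
Qed.

Lemma L1 h n k : (tt h (n + k) <= tt h n + k * gg h (n + k))%nat.
Proof.
  induction k. rewrite !Nat.add_0_r, ?Nat.mul_0_l, ?Nat.add_0_r. lia.
  rewrite Nat.add_succ_r, tt_S. pose proof (gg_mono1 h (n + k)).
  assert (k * gg h (n + k) <= k * gg h (S (n + k)))%nat by (apply Nat.mul_le_mono_l; auto).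
  rewrite Nat.mul_succ_l. lia.
Qed.

Lemma L2 h m k : (tt h m + k * gg h m <= tt h (m + k))%nat.
Proof.
  induction k. rewrite !Nat.add_0_r, ?Nat.mul_0_l, ?Nat.add_0_r. lia.
  rewrite Nat.add_succ_r, tt_S. pose proof (gg_mono h m k). rewrite Nat.mul_succ_l. lia.
Qed.

Lemma gg_pos h m : 0 < INR (gg h m).
Proof. apply lt_0_INR. unfold gg; lia. Qed.

Lemma key_int h m n :
  INR (tt h m) - INR (tt h n) <= INR (gg h m) * (INR m - INR n).
Proof.
  destruct (Nat.le_ge_cases n m) as [Hnm | Hnm].
  - replace m with (n + (m - n))%nat by lia.
    pose proof (L1 h n (m - n)) as H. apply le_INR in H.
    rewrite plus_INR, mult_INR in H. rewrite plus_INR. lra.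
  - replace n with (m + (n - m))%nat by lia.
    pose proof (L2 h m (n - m)) as H. apply le_INR in H.
    rewrite plus_INR, mult_INR in H. rewrite plus_INR.
    pose proof (gg_pos h m). pose proof (pos_INR (n - m)). nra.
Qed.

Definition ell h m x := INR m + (x - INR (tt h m)) / INR (gg h m).

Lemma ell_ge h n m x : INR (tt h n) <= x -> INR n <= ell h m x.
Proof.
  intros Hx. unfold ell. pose proof (key_int h m n). pose proof (gg_pos h m).
  set (q := (x - INR (tt h m)) / INR (gg h m)).
  assert (q * INR (gg h m) = x - INR (tt h m)) by (unfold q; field; lra).
  nra.
Qed.

Lemma ell_le h n y : y <= INR (tt h (S n)) -> ell h n y <= INR n + 1.
Proof.
  intros Hy. unfold ell. rewrite tt_S, plus_INR in Hy. pose proof (gg_pos h n).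
  set (q := (y - INR (tt h n)) / INR (gg h n)).
  assert (q * INR (gg h n) = y - INR (tt h n)) by (unfold q; field; lra).
  nra.
Qed.

Lemma ell_nonneg h m x : 0 <= x -> 0 <= ell h m x.
Proof. intros; change 0 with (INR 0); apply ell_ge; simpl; lra. Qed.

Definition ff h x := real (Inf_seq (fun m => Finite (ell h m x))).

Lemma ff_spec h x : 0 <= x ->
  (forall m, ff h x <= ell h m x) /\
  (forall c, (forall m, c <= ell h m x) -> c <= ff h x).
Proof.
  intros Hx. unfold ff.
  pose proof (Inf_seq_correct (fun m => Finite (ell h m x))) as H.
  destruct (Inf_seq (fun m => Finite (ell h m x))) as [l| |]; simpl in *.
  - split.
    + intros m. apply Rnot_lt_le; intros Hlt.
      assert (He : 0 < l - ell h m x) by lra.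
      destruct (H (mkposreal _ He)) as [H1 _]. specialize (H1 m). simpl in H1. lra.
    + intros c Hc. apply Rnot_lt_le; intros Hlt.
      assert (He : 0 < c - l) by lra.
      destruct (H (mkposreal _ He)) as [_ [n Hn]]. simpl in Hn. specialize (Hc n). lra.
  - exfalso. specialize (H (ell h 0 x) 0%nat). simpl in H. lra.
  - exfalso. destruct (H 0) as [n Hn]. simpl in Hn. pose proof (ell_nonneg h n x Hx). lra.
Qed.

Lemma ff_le h x m : 0 <= x -> ff h x <= ell h m x.
Proof. intros Hx; apply (ff_spec h x Hx). Qed.
Lemma ff_ge h x c : 0 <= x -> (forall m, c <= ell h m x) -> c <= ff h x.
Proof. intros Hx; apply (ff_spec h x Hx). Qed.

Lemma ff_lower h n x : INR (tt h n) <= x -> INR n <= ff h x.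
Proof.
  intros Hx. assert (0 <= x) by (pose proof (pos_INR (tt h n)); lra).
  apply ff_ge; auto. intros; apply ell_ge; auto.
Qed.

Lemma ff_upper h n y : 0 <= y -> y <= INR (tt h (S n)) -> ff h y <= INR n + 1.
Proof. intros. eapply Rle_trans. apply ff_le with (m := n); auto. apply ell_le; auto. Qed.

Lemma ff_nonneg h x : 0 <= x -> 0 <= ff h x.
Proof. intros; change 0 with (INR 0); apply ff_lower; simpl; lra. Qed.

Lemma ff_0 h : ff h 0 = 0.
Proof.
  apply Rle_antisym; [|apply ff_nonneg; lra].
  eapply Rle_trans. apply ff_le with (m := 0%nat); lra.
  unfold ell; simpl. unfold Rdiv; lra.
Qed.

Lemma ff_mono h x y : 0 <= x -> x <= y -> ff h x <= ff h y.
Proof.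
  intros Hx Hxy. apply ff_ge; [lra|]. intros m.
  eapply Rle_trans. apply ff_le with (m := m); auto.
  unfold ell. pose proof (gg_pos h m). unfold Rdiv.
  apply Rplus_le_compat_l. apply Rmult_le_compat_r. left; apply Rinv_0_lt_compat; lra. lra.
Qed.

Lemma ff_lip h x y : 0 <= x -> 0 <= y -> ff h y <= ff h x + Rabs (y - x).
Proof.
  intros Hx Hy.
  assert (ff h y - Rabs (y - x) <= ff h x); [|lra].
  apply ff_ge; auto. intros m.
  pose proof (ff_le h y m Hy). unfold ell in *.
  pose proof (gg_pos h m).
  assert (INR (gg h m) >= 1).
  { unfold gg. apply Rle_ge. change 1 with (INR 1). apply le_INR. lia. }
  assert ((y - INR (tt h m)) / INR (gg h m) - (x - INR (tt h m)) / INR (gg h m)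
          = (y - x) / INR (gg h m)) by (field; lra).
  assert ((y - x) / INR (gg h m) <= Rabs (y - x)).
  { apply Rle_trans with (Rabs ((y - x) / INR (gg h m))). apply Rle_abs.
    rewrite Rabs_div by lra. rewrite (Rabs_right (INR (gg h m))) by lra.
    pose proof (Rabs_pos (y - x)).
    apply Rmult_le_reg_r with (INR (gg h m)); [lra|].
    unfold Rdiv. rewrite Rmult_assoc, Rinv_l by lra. nra. }
  lra.
Qed.

Lemma ff_concave h : concave_on_nonneg (ff h).
Proof.
  intros x y t Hx Hy Ht.
  assert (0 <= t * x + (1 - t) * y) by nra.
  apply ff_ge; auto. intros m.
  pose proof (ff_le h x m Hx). pose proof (ff_le h y m Hy).
  assert (ell h m (t * x + (1 - t) * y) = t * ell h m x + (1 - t) * ell h m y).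
  { unfold ell. pose proof (gg_pos h m). field. lra. }
  nra.
Qed.

Lemma ff_subadd h x y : 0 <= x -> 0 <= y -> ff h (x + y) <= ff h x + ff h y.
Proof.
  intros Hx Hy. destruct (Req_dec (x + y) 0) as [E|E].
  { assert (x = 0) by lra. assert (y = 0) by lra. subst. rewrite Rplus_0_r, ff_0. lra. }
  pose proof (ff_concave h (x + y) 0 (x / (x + y)) ltac:(lra) ltac:(lra)) as H1.
  pose proof (ff_concave h (x + y) 0 (y / (x + y)) ltac:(lra) ltac:(lra)) as H2.
  assert (0 <= x / (x + y) <= 1).
  { split. apply Rdiv_le_0_compat; lra. apply Rmult_le_reg_r with (x + y); [lra|].
    unfold Rdiv; rewrite Rmult_assoc, Rinv_l by lra. lra. }
  assert (0 <= y / (x + y) <= 1).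
  { split. apply Rdiv_le_0_compat; lra. apply Rmult_le_reg_r with (x + y); [lra|].
    unfold Rdiv; rewrite Rmult_assoc, Rinv_l by lra. lra. }
  specialize (H1 H). specialize (H2 H0).
  rewrite ff_0 in H1, H2.
  replace (x / (x + y) * (x + y) + (1 - x / (x + y)) * 0) with x in H1 by (field; lra).
  replace (y / (x + y) * (x + y) + (1 - y / (x + y)) * 0) with y in H2 by (field; lra).
  rewrite Rmult_0_r, Rplus_0_r in H1, H2.
  assert (x / (x + y) * ff h (x + y) + y / (x + y) * ff h (x + y) = ff h (x + y)) by (field; lra).
  lra.
Qed.

Lemma ff_pos h x : 0 < x -> 0 < ff h x.
Proof.
  intros Hx. apply Rlt_le_trans with (Rmin (x / INR (gg h 0)) (1/2)).
  { apply Rmin_glb_lt. apply Rdiv_lt_0_compat; [lra| apply gg_pos]. lra. }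
  apply ff_ge; [lra|]. intros m. destruct m as [|m].
  - apply Rle_trans with (x / INR (gg h 0)). apply Rmin_l. unfold ell; simpl. lra.
  - apply Rle_trans with (1/2). apply Rmin_r. unfold ell.
    pose proof (gg_pos h (S m)).
    assert (2 * INR (tt h (S m)) <= INR (gg h (S m))).
    { unfold gg. replace 2 with (INR 2) by (simpl; lra). rewrite <- mult_INR. apply le_INR. nia. }
    rewrite S_INR. pose proof (pos_INR m).
    set (q := (x - INR (tt h (S m))) / INR (gg h (S m))).
    assert (q * INR (gg h (S m)) = x - INR (tt h (S m))) by (unfold q; field; lra).
    nra.
Qed.

Lemma nat_gt r : exists n : nat, r < INR n.
Proof.
  destruct (nfloor_ex (Rabs r) (Rabs_pos r)) as [n Hn].
  exists (S n). rewrite S_INR. pose proof (Rle_abs r). lra.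
Qed.

Lemma tt_ge h m : (m <= tt h m)%nat.
Proof. induction m. lia. rewrite tt_S. unfold gg at 1. lia. Qed.

Lemma tt_growth h m : ((m + 3) * tt h m <= tt h (S m))%nat.
Proof. rewrite tt_S. unfold gg. nia. Qed.

Lemma tt_mono h m k : (tt h m <= tt h (m + k))%nat.
Proof. pose proof (L2 h m k). lia. Qed.

Lemma loc_aux h k : forall N x, INR (tt h N) <= x -> x < INR (tt h (N + k)) ->
  exists n, (N <= n)%nat /\ INR (tt h n) <= x <= INR (tt h (S n)).
Proof.
  induction k; intros N x H1 H2.
  - rewrite Nat.add_0_r in H2. lra.
  - destruct (Rle_lt_dec x (INR (tt h (S N)))) as [Hle|Hlt].
    + exists N. split; [lia|lra].
    + destruct (IHk (S N) x) as [n [Hn1 Hn2]]. lra.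
      replace (S N + k)%nat with (N + S k)%nat by lia. auto.
      exists n. split; [lia|auto].
Qed.

Lemma loc h N x : INR (tt h N) <= x ->
  exists n, (N <= n)%nat /\ INR (tt h n) <= x <= INR (tt h (S n)).
Proof.
  intros H. destruct (nat_gt x) as [k Hk].
  apply (loc_aux h k N x H).
  apply Rlt_le_trans with (INR k); auto.
  apply le_INR. pose proof (tt_ge h k). pose proof (tt_mono h k N).
  replace (k + N)%nat with (N + k)%nat in * by lia. lia.
Qed.

Lemma ffD h b n x : 1 <= b -> b <= INR n -> INR (tt h n) <= x ->
  ff h (b * x) <= ff h x + 2.
Proof.
  intros Hb Hbn Hx. destruct (loc h n x Hx) as [n' [Hn' [H1 H2]]].
  pose proof (ff_lower h n' x H1).
  assert (0 <= x) by (pose proof (pos_INR (tt h n')); lra).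
  assert (b * x <= INR (tt h (S (S n')))).
  { pose proof (tt_growth h (S n')) as G. apply le_INR in G.
    rewrite mult_INR, plus_INR in G.
    apply le_INR in Hn'.
    assert (INR (S n') + INR 3 = INR n' + 4) by (rewrite S_INR; simpl; lra).
    rewrite H3 in G.
    pose proof (pos_INR (tt h (S n'))). nra. }
  pose proof (ff_upper h (S n') (b * x) ltac:(nra) H3). rewrite S_INR in H4. lra.
Qed.

Lemma ratio_close F G eps : 0 < F -> Rabs (G - F) < eps * F -> Rabs (G / F - 1) < eps.
Proof.
  intros HF H. replace (G / F - 1) with ((G - F) / F) by (field; lra).
  rewrite Rabs_div by lra. rewrite (Rabs_right F) by lra.
  apply Rmult_lt_reg_r with F; auto. unfold Rdiv. rewrite Rmult_assoc, Rinv_l by lra. lra.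
Qed.

Lemma ff_slow h : slowly_varying (ff h).
Proof.
  intros a Ha. apply is_lim_spec. intros eps. simpl.
  pose proof (cond_pos eps) as Heps.
  destruct (Rle_lt_dec 1 a) as [Ha1|Ha1].
  - destruct (nat_gt (a + 2 / eps)) as [n Hn].
    assert (0 < 2 / eps) by (apply Rdiv_lt_0_compat; lra).
    exists (INR (tt h n)). intros x Hx.
    assert (0 <= x) by (pose proof (pos_INR (tt h n)); lra).
    pose proof (ff_lower h n x ltac:(lra)).
    pose proof (ffD h a n x Ha1 ltac:(lra) ltac:(lra)).
    pose proof (ff_mono h x (a * x) H0 ltac:(nra)).
    apply ratio_close. lra.
    assert (2 < eps * ff h x).
    { assert (2 / eps * eps = 2) by (field; lra). nra. }
    rewrite Rabs_right; lra.
  - set (b := / a).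
    assert (Hb : 1 <= b).
    { unfold b. apply Rmult_le_reg_r with a; auto. rewrite Rinv_l by lra. lra. }
    destruct (nat_gt (b + 2 / eps)) as [n Hn].
    assert (0 < 2 / eps) by (apply Rdiv_lt_0_compat; lra).
    exists (INR (tt h n) / a). intros x Hx.
    assert (Hy : INR (tt h n) < a * x).
    { apply Rmult_lt_compat_l with (r := a) in Hx; auto.
      replace (a * (INR (tt h n) / a)) with (INR (tt h n)) in Hx by (field; lra). lra. }
    assert (0 <= a * x) by (pose proof (pos_INR (tt h n)); lra).
    pose proof (ff_lower h n (a * x) ltac:(lra)).
    pose proof (ffD h b n (a * x) Hb ltac:(lra) ltac:(lra)).
    replace (b * (a * x)) with x in H2 by (unfold b; field; lra).
    assert (0 <= x) by nra.
    pose proof (ff_mono h (a * x) x H0 ltac:(nra)).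
    apply ratio_close. lra.
    assert (2 < eps * ff h (a * x)).
    { assert (2 / eps * eps = 2) by (field; lra). nra. }
    rewrite Rabs_left1; nra.
Qed.

Lemma ff_modulus h : is_modulus (ff h).
Proof.
  split; [|split; [|split; [|split]]].
  - apply ff_nonneg.
  - intros x Hx. split.
    + intros H. destruct (Rle_lt_or_eq_dec 0 x Hx) as [Hp|Hp]; auto.
      pose proof (ff_pos h x Hp). lra.
    + intros ->. apply ff_0.
  - apply ff_subadd.
  - intros x y Hx Hxy. apply ff_mono; auto.
  - intros x Hx eps Heps. exists eps. split; auto. intros y Hy Hyx.
    pose proof (ff_lip h x y Hx Hy). pose proof (ff_lip h y x Hy Hx).
    rewrite Rabs_minus_sym in H0.
    apply Rabs_def1; lra.
Qed.

Lemma ff_unb h : unbounded_fun (ff h).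
Proof.
  intros M. destruct (nat_gt M) as [n Hn]. exists (INR (tt h n)). split.
  apply pos_INR. pose proof (ff_lower h n (INR (tt h n)) (Rle_refl _)). lra.
Qed.

Lemma ind_le1 P : (Defs.ind P <= 1)%nat.
Proof. unfold Defs.ind. destruct excluded_middle_informative; lia. Qed.

Lemma count_le K n : (count_upto K n <= n)%nat.
Proof. induction n; simpl. lia. pose proof (ind_le1 (K (S n))). lia. Qed.

Lemma count_mono K n k : (count_upto K n <= count_upto K (n + k))%nat.
Proof. induction k. rewrite Nat.add_0_r; lia. rewrite Nat.add_succ_r. simpl. lia. Qed.

Lemma count_step K n : K (S n) -> count_upto K (S n) = S (count_upto K n).
Proof. intros H. simpl. unfold Defs.ind. destruct excluded_middle_informative; [lia|tauto]. Qed.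

Lemma count_const K N : (forall k, (N < k)%nat -> ~ K k) ->
  forall k, count_upto K (N + k) = count_upto K N.
Proof.
  intros H k. induction k. rewrite Nat.add_0_r; auto.
  rewrite Nat.add_succ_r. simpl. unfold Defs.ind.
  destruct excluded_middle_informative as [HK|HK]. exfalso; apply (H (S (N + k))); [lia|exact HK]. lia.
Qed.

Lemma count_inf K : (forall N, exists k, (N <= k)%nat /\ K k) ->
  forall j, exists n, (j <= count_upto K n)%nat.
Proof.
  intros H j. induction j. exists 0%nat; lia.
  destruct IHj as [n Hn]. destruct (H (S n)) as [k [Hk HK]].
  destruct k as [|k]. lia. exists (S k). rewrite count_step by auto.
  pose proof (count_mono K n (k - n)). replace (n + (k - n))%nat with k in H0 by lia. lia.
Qed.

Lemma dens_fail h K : (forall j, (j <= count_upto K (h j))%nat) -> ~ f_density_zero (ff h) K.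
Proof.
  intros Hh H. unfold f_density_zero in H. apply is_lim_seq_spec in H.
  assert (Hp : 0 < 1/2) by lra.
  destruct (H (mkposreal _ Hp)) as [N HN]. simpl in HN.
  set (m := S N). set (n := h (tt h m)).
  pose proof (Hh (tt h m)) as Hc. fold n in Hc.
  pose proof (count_le K n). pose proof (tt_ge h m).
  specialize (HN n ltac:(unfold m in *; lia)).
  pose proof (ff_lower h m (INR (count_upto K n)) ltac:(apply le_INR; lia)) as HG.
  assert (Hn1 : (n <= tt h (S m))%nat).
  { rewrite tt_S. unfold gg. fold n. lia. }
  pose proof (ff_upper h m (INR n) (pos_INR n) ltac:(apply le_INR; lia)) as HF.
  assert (Hpos : 0 < ff h (INR n)).
  { apply ff_pos. apply lt_0_INR. unfold m in *; lia. }
  rewrite Rminus_0_r in HN.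
  assert (HNm : 1 <= INR m) by (unfold m; rewrite S_INR; pose proof (pos_INR N); lra).
  set (G := ff h (INR (count_upto K n))) in *. set (F := ff h (INR n)) in *.
  assert (G / F < 1/2) by (eapply Rle_lt_trans; [apply Rle_abs|exact HN]).
  assert (G / F * F = G) by (field; lra).
  nra.
Qed.

Lemma iii_to_i (X : Type) (rho : X -> X -> R) (A : nat -> X -> Prop) (A0 : X -> Prop) :
  (forall f, is_modulus f -> unbounded_fun f -> concave_on_nonneg f ->
        slowly_varying f -> f_wijsman_stat_conv rho f A A0) ->
  wijsman_conv rho A A0.
Proof.
  intros H3 x. apply NNPP. intros Hn.
  rewrite <- is_lim_seq_spec in Hn. simpl in Hn.
  apply not_all_ex_not in Hn. destruct Hn as [eps Heps].
  set (K := fun k => Rabs (dist_set rho x (A k) - dist_set rho x A0) >= eps).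
  assert (Hinf : forall N, exists k, (N <= k)%nat /\ K k).
  { intros N. apply NNPP. intros Hno. apply Heps. exists N. intros k Hk.
    apply Rnot_ge_lt. intros HK. apply Hno. exists k. split; auto. }
  pose proof (count_inf K Hinf) as Hc.
  set (h := fun j => proj1_sig (constructive_indefinite_description _ (Hc j))).
  assert (Hh : forall j, (j <= count_upto K (h j))%nat).
  { intros j. unfold h. destruct constructive_indefinite_description; simpl; auto. }
  apply (dens_fail h K Hh).
  apply (H3 (ff h) (ff_modulus h) (ff_unb h) (ff_concave h) (ff_slow h) x eps (cond_pos eps)).
Qed.

Lemma i_to_ii (X : Type) (rho : X -> X -> R) (A : nat -> X -> Prop) (A0 : X -> Prop) :
  wijsman_conv rho A A0 ->
  (forall f, is_modulus f -> unbounded_fun f -> f_wijsman_stat_conv rho f A A0).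
Proof.
  intros Hw f Hf Hu x eps Heps. unfold f_density_zero.
  specialize (Hw x). apply is_lim_seq_spec in Hw.
  destruct (Hw (mkposreal _ Heps)) as [N HN]. simpl in HN.
  set (K := fun k => Rabs (dist_set rho x (A k) - dist_set rho x A0) >= eps).
  assert (HK : forall k, (N < k)%nat -> ~ K k).
  { intros k Hk HKk. unfold K in HKk. specialize (HN k ltac:(lia)). lra. }
  pose proof (count_const K N HK) as Hcc.
  destruct Hf as [Hf0 [Hf1 [Hf2 [Hf3 Hf4]]]].
  apply is_lim_seq_spec. intros e. pose proof (cond_pos e) as He.
  set (C := f (INR (count_upto K N))).
  assert (HC : 0 <= C) by (apply Hf0, pos_INR).
  destruct (Hu (C / e)) as [x0 [Hx0 Hfx0]].
  destruct (nat_gt x0) as [N' HN'].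
  exists (N + N')%nat. intros n Hn.
  replace n with (N + (n - N))%nat by lia. rewrite Hcc. fold C.
  replace (N + (n - N))%nat with n by lia.
  assert (Hfn : f x0 <= f (INR n)).
  { apply Hf3; auto. apply Rle_trans with (INR N'); [lra|]. apply le_INR; lia. }
  assert (0 <= C / e) by (apply Rdiv_le_0_compat; lra).
  assert (Hpos : 0 < f (INR n)) by lra.
  rewrite Rminus_0_r, Rabs_right.
  2: { apply Rle_ge, Rdiv_le_0_compat; lra. }
  apply Rmult_lt_reg_r with (f (INR n)); auto.
  unfold Rdiv at 1. rewrite Rmult_assoc, Rinv_l by lra. rewrite Rmult_1_r.
  assert (C / e * e = C) by (field; lra). nra.
Qed.

Theorem theorem2p7 (X : Type) (rho : X -> X -> R) (Hrho : is_metric rho)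
  (A : nat -> X -> Prop) (A0 : X -> Prop)
  (HA : forall k, in_CL rho (A k)) (HA0 : in_CL rho A0) :
  (wijsman_conv rho A A0 <->
     (forall f, is_modulus f -> unbounded_fun f ->
        f_wijsman_stat_conv rho f A A0)) /\
  ((forall f, is_modulus f -> unbounded_fun f ->
        f_wijsman_stat_conv rho f A A0) <->
     (forall f, is_modulus f -> unbounded_fun f -> concave_on_nonneg f ->
        slowly_varying f -> f_wijsman_stat_conv rho f A A0)).
Proof.
  split; split.
  - apply i_to_ii.
  - intros H. apply iii_to_i. intros f Hf Hu _ _. apply H; auto.
  - intros H f Hf Hu _ _. apply H; auto.
  - intros H. apply i_to_ii. apply iii_to_i. exact H.
Qed.
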